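(* Let $\sigma_1,\sigma_2$ be convex polytopes in a Euclidean vector space $\mathbb{E}$, let $\sigma$ be the convex hull of some of the vertices of $\sigma_1\times\sigma_2\subseteq\mathbb{E}\times\mathbb{E}$, and let $\pi\colon\mathbb{E}\times\mathbb{E}\to\mathbb{E}$, $\pi(x,y)=x-y$. If $D_1$ is sufficiently rich for $\sigma_1$ and $D_2$ is sufficiently rich for $\sigma_2$, then $(D_1+D_2)\cup D_1\cup D_2$ is sufficiently rich for $\pi(\sigma)$; in particular it is sufficiently rich for $\sigma_1-\sigma_2$.
   Context: A finite set $D$ is sufficiently rich for a polytope $\tau$ if $w-v\in D$ for any two distinct vertices $v,w$ of $\tau$. $D_1+D_2$ and $\sigma_1-\sigma_2$ denote Minkowski sum and difference. *)

(* Defs.v *)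
From HB Require Import structures.
From mathcomp Require Import all_boot all_order all_algebra.
Set Implicit Arguments. Unset Strict Implicit. Unset Printing Implicit Defensive.
Import Order.TTheory GRing.Theory Num.Theory.
Local Open Scope ring_scope.

Section Defs.
Variable R : realFieldType.
Variable V : lmodType R.

Definition conv_hull (A : V -> Prop) : V -> Prop := fun x =>
  exists (m : nat) (p : 'I_m -> V) (l : 'I_m -> R),
    (forall i, A (p i)) /\ (forall i, 0 <= l i) /\
    \sum_(i < m) l i = 1 /\ x = \sum_(i < m) l i *: p i.

Definition is_polytope (P : V -> Prop) : Prop :=
  exists s : seq V, forall x, P x <-> conv_hull (fun y => y \in s) x.

Definition is_vertex (P : V -> Prop) (v : V) : Prop :=
  P v /\ forall x y (t : R), P x -> P y -> 0 < t -> t < 1 ->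
    v = (1 - t) *: x + t *: y -> x = v /\ y = v.

Definition suff_rich (D : seq V) (tau : V -> Prop) : Prop :=
  forall v w, is_vertex tau v -> is_vertex tau w -> v <> w -> w - v \in D.

Definition mink_diff (A B : V -> Prop) : V -> Prop :=
  fun x => exists a b, A a /\ B b /\ x = a - b.
End Defs.

Definition rich_union (R : realFieldType) (V : lmodType R) (D1 D2 : seq V) : seq V :=
  [seq a + b | a <- D1, b <- D2] ++ D1 ++ D2.

Definition setX_pred (T1 T2 : Type) (A : T1 -> Prop) (B : T2 -> Prop) : T1 * T2 -> Prop :=
  fun z => A z.1 /\ B z.2.

Definition pi_img (R : realFieldType) (V : lmodType R) (S : V * V -> Prop) : V -> Prop :=
  fun x => exists z, S z /\ x = z.1 - z.2.

(* Main.v *)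
Require Import Defs.
From HB Require Import structures.
From mathcomp Require Import all_boot all_order all_algebra.
Import Order.TTheory GRing.Theory Num.Theory.
Local Open Scope ring_scope.

Lemma vertex_comb (R : realFieldType) (V : lmodType R) (P A : V -> Prop) :
  (forall m (p : 'I_m -> V) (l : 'I_m -> R), (forall i, A (p i)) ->
     (forall i, 0 <= l i) -> \sum_(i < m) l i = 1 -> P (\sum_(i < m) l i *: p i)) ->
  forall v, is_vertex P v -> forall m (p : 'I_m -> V) (l : 'I_m -> R),
  (forall i, A (p i)) -> (forall i, 0 <= l i) -> \sum_(i < m) l i = 1 ->
  v = \sum_(i < m) l i *: p i -> exists i, p i = v.
Proof.
move=> HA v [Pv Hv]; elim=> [|m IH] p l Ap l0 l1 ev.
  by move: l1; rewrite big_ord0 => /eqP; rewrite eq_sym oner_eq0.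
move: l1 ev; rewrite !big_ord_recl => l1 ev.
have s0 : 0 <= \sum_(i < m) l (lift ord0 i) by apply: sumr_ge0.
have [z|nz] := eqVneq (l ord0) 0.
  have h1 : \sum_(i < m) l (lift ord0 i) = 1 by rewrite -l1 z add0r.
  have h2 : v = \sum_(i < m) l (lift ord0 i) *: p (lift ord0 i).
    by rewrite ev z scale0r add0r.
  have [i Hi] := IH (fun i => p (lift ord0 i)) (fun i => l (lift ord0 i))
    (fun i => Ap _) (fun i => l0 _) h1 h2.
  by exists (lift ord0 i).
have [o|no] := eqVneq (l ord0) 1.
  have s00 : \sum_(i < m) l (lift ord0 i) = 0.
    by apply: (@addrI _ 1); rewrite addr0 -{2}l1 o.
  have := psumr_eq0P (fun i _ => l0 (lift ord0 i)) s00 => H.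
  exists ord0; rewrite ev o scale1r big1 ?addr0 // => i _.
  by rewrite H // scale0r.
set t := l ord0 in nz no l1 ev *.
have t1 : 1 - t != 0 by rewrite subr_eq0 eq_sym.
have e1t : \sum_(i < m) l (lift ord0 i) = 1 - t by rewrite -l1 addrC addKr.
set q := \sum_(i < m) (l (lift ord0 i) / (1 - t)) *: p (lift ord0 i).
have Pq : P q.
  apply: HA => [i|i|]; first exact: Ap.
    apply: divr_ge0; first exact: l0.
    by rewrite -e1t.
  by rewrite -mulr_suml e1t divff.
have Pp0 : P (p ord0).
  have := HA 1%N (fun _ => p ord0) (fun _ => 1) (fun _ => Ap _) (fun _ => ler01).
  by rewrite !big_ord1 scale1r; apply.
have ev' : v = (1 - t) *: q + t *: p ord0.
  rewrite ev addrC /q scaler_sumr; congr (_ + _); apply: eq_bigr => i _.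
  by rewrite scalerA mulrC divfK.
have tp : 0 < t by rewrite lt_def nz l0.
have t1' : t < 1.
  by rewrite lt_def eq_sym no -l1 lerDl.
have [_ H] := Hv _ _ _ Pq Pp0 tp t1' ev'.
by exists ord0.
Qed.

Lemma comb_const (R : realFieldType) (V : lmodType R) (t : R) (b : V) :
  (1 - t) *: b + t *: b = b.
Proof. by rewrite -scalerDl subrK scale1r. Qed.

Lemma vertex_pair (R : realFieldType) (V : lmodType R) (s1 s2 : V -> Prop) (w : V * V) :
  is_vertex (setX_pred s1 s2) w -> is_vertex s1 w.1 /\ is_vertex s2 w.2.
Proof.
case: w => a1 a2 [[/= S1 S2] Hv]; split; split => // x y t Px Py t0 t1 e.
  have E : (a1, a2) = (1 - t) *: (x, a2) + t *: (y, a2).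
    by rewrite -[RHS]/(((1 - t) *: x + t *: y), ((1 - t) *: a2 + t *: a2)) comb_const -e.
  by have [[->] [->]] := Hv (x, a2) (y, a2) t (conj Px S2) (conj Py S2) t0 t1 E.
have E : (a1, a2) = (1 - t) *: (a1, x) + t *: (a1, y).
  by rewrite -[RHS]/(((1 - t) *: a1 + t *: a1), ((1 - t) *: x + t *: y)) comb_const -e.
by have [[->] [->]] := Hv (a1, x) (a1, y) t (conj S1 Px) (conj S1 Py) t0 t1 E.
Qed.

Lemma mink_vertex (R : realFieldType) (V : lmodType R) (s1 s2 : V -> Prop) (a b : V) :
  is_vertex (mink_diff s1 s2) (a - b) -> s1 a -> s2 b -> is_vertex s1 a /\ is_vertex s2 b.
Proof.
move=> [_ Hv] Sa Sb; split; split => // x y t Px Py t0 t1 e.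
  have Hx : mink_diff s1 s2 (x - b) by exists x, b.
  have Hy : mink_diff s1 s2 (y - b) by exists y, b.
  have [] := Hv _ _ _ Hx Hy t0 t1.
    by rewrite !scalerBr addrACA -opprD comb_const e.
  by move=> /addIr -> /addIr ->.
have Hx : mink_diff s1 s2 (a - x) by exists a, x.
have Hy : mink_diff s1 s2 (a - y) by exists a, y.
have [] := Hv _ _ _ Hx Hy t0 t1.
  by rewrite !scalerBr addrACA -opprD comb_const e.
by move=> /addrI/oppr_inj -> /addrI/oppr_inj ->.
Qed.

Lemma rich_diff (R : realFieldType) (V : lmodType R) (s1 s2 : V -> Prop)
   (D1 D2 : seq V) a1 a2 b1 b2 :
  is_vertex s1 a1 -> is_vertex s1 b1 -> is_vertex s2 a2 -> is_vertex s2 b2 ->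
  suff_rich D1 s1 -> suff_rich D2 s2 -> a1 - a2 <> b1 - b2 ->
  (b1 - b2) - (a1 - a2) \in rich_union D1 D2.
Proof.
move=> Va1 Vb1 Va2 Vb2 H1 H2 ne; rewrite /rich_union !mem_cat.
have [e1|n1] := eqVneq a1 b1.
  have n2 : b2 <> a2 by move=> e2; apply: ne; rewrite e1 e2.
  have := H2 _ _ Vb2 Va2 n2.
  have -> : b1 - b2 - (a1 - a2) = a2 - b2.
    by rewrite e1 opprB [RHS]addrC addrC addrA addrAC [b1 - b2]addrC addrK addrC.
  by move=> ->; rewrite !orbT.
have [e2|n2] := eqVneq a2 b2.
  have := H1 _ _ Va1 Vb1 (elimN eqP n1).
  have -> : b1 - b2 - (a1 - a2) = b1 - a1.
    by rewrite e2 opprB addrA subrK.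
  by move=> ->; rewrite orbT.
have m1 := H1 _ _ Va1 Vb1 (elimN eqP n1).
have m2 := H2 _ _ Vb2 Va2 (fun h => (elimN eqP n2) (esym h)).
have -> : b1 - b2 - (a1 - a2) = (b1 - a1) + (a2 - b2).
  by rewrite opprB [LHS]addrACA [RHS]addrACA [- a1 + _]addrC.
by rewrite (allpairs_f (fun a b => a + b) m1 m2).
Qed.

Lemma pi_sum (R : realFieldType) (V : lmodType R) m (l : 'I_m -> R) (q : 'I_m -> V * V) :
  (\sum_(i < m) l i *: q i).1 - (\sum_(i < m) l i *: q i).2 =
  \sum_(i < m) l i *: ((q i).1 - (q i).2).
Proof.
rewrite (big_morph fst (id1 := 0) (op1 := +%R)) //.
rewrite (big_morph snd (id1 := 0) (op1 := +%R)) //.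
rewrite -sumrB; apply: eq_bigr => i _ /=.
by rewrite scalerBr.
Qed.

Theorem mainTheorem17 (R : realFieldType) (n : nat)
    (sigma1 sigma2 : 'rV[R]_n -> Prop) (sigma : 'rV[R]_n * 'rV[R]_n -> Prop)
    (D1 D2 : seq 'rV[R]_n) :
  is_polytope sigma1 -> is_polytope sigma2 ->
  (exists W : seq ('rV[R]_n * 'rV[R]_n),
      (forall w, w \in W -> is_vertex (setX_pred sigma1 sigma2) w) /\
      (forall z, sigma z <-> conv_hull (fun y => y \in W) z)) ->
  suff_rich D1 sigma1 -> suff_rich D2 sigma2 ->
  suff_rich (rich_union D1 D2) (pi_img sigma) /\
  suff_rich (rich_union D1 D2) (mink_diff sigma1 sigma2).
Proof.
move=> _ _ [W [WV Wh]] H1 H2; split; last first.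
  move=> v w Vv Vw ne.
  have [a [b [Sa [Sb ev]]]] := Vv.1.
  have [a' [b' [Sa' [Sb' ew]]]] := Vw.1.
  rewrite ev in Vv; rewrite ew in Vw.
  have [Va Vb] := @mink_vertex _ _ _ _ _ _ Vv Sa Sb.
  have [Va' Vb'] := @mink_vertex _ _ _ _ _ _ Vw Sa' Sb'.
  rewrite ev ew; apply: (@rich_diff _ _ sigma1 sigma2 D1 D2 a b a' b') => //.
  by rewrite -ev -ew.
pose A := fun y : 'rV[R]_n => exists w, w \in W /\ y = w.1 - w.2.
have HA : forall m (p : 'I_m -> 'rV[R]_n) (l : 'I_m -> R), (forall i, A (p i)) ->
     (forall i, 0 <= l i) -> \sum_(i < m) l i = 1 -> pi_img sigma (\sum_(i < m) l i *: p i).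
  move=> m p l Ap l0 l1.
  have [q Hq] := fin_all_exists Ap.
  exists (\sum_(i < m) l i *: q i); split.
    by apply/Wh; exists m, q, l; split => // i; case: (Hq i).
  rewrite pi_sum; apply: eq_bigr => i _; by case: (Hq i) => _ ->.
have key : forall v, is_vertex (pi_img sigma) v ->
    exists w, w \in W /\ v = w.1 - w.2.
  move=> v Vv; have [z [Sz ez]] := Vv.1.
  have [m [p [l [Wp [l0 [l1 ezs]]]]]] := (Wh z).1 Sz.
  have ev : v = \sum_(i < m) l i *: ((p i).1 - (p i).2) by rewrite ez ezs pi_sum.
  have [i Hi] := @vertex_comb _ _ _ A HA v Vv m (fun i => (p i).1 - (p i).2) l
    (fun i => ex_intro _ (p i) (conj (Wp i) (erefl _))) l0 l1 ev.
  by exists (p i); split => //; rewrite -Hi.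
move=> v w Vv Vw ne.
have [[a1 a2] [Wa ev]] := key v Vv.
have [[b1 b2] [Wb ew]] := key w Vw.
have [Va1 Va2] := @vertex_pair _ _ _ _ _ (WV _ Wa).
have [Vb1 Vb2] := @vertex_pair _ _ _ _ _ (WV _ Wb).
rewrite ev ew; apply: (@rich_diff _ _ sigma1 sigma2 D1 D2 a1 a2 b1 b2) => //.
by rewrite -ev -ew.
Qed.
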